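(* Assume $2^{\aleph_0}=\aleph_1$ (so that $\omega_1^{<\omega_1}=\omega_1$). Let $G$ be a closed $\omega_1$-Baire subgroup of $S_{\omega_1}$. Then there is a good quantifier $Q_G$ of type $\langle 2\rangle$ on $\omega_1$ with $\mathrm{Aut}(Q_G)=G$.
   Context: $S_{\omega_1}$ is the group of permutations of $\omega_1$ with the subspace topology from $\omega_1^{\omega_1}$, where basic open sets are given by countable partial functions. $2^{\omega_1\times\omega_1}$ has basic open sets $\{f:s\subseteq f\}$ for countable partial functions $s$. A subspace is $\omega_1$-Baire if the intersection of any $\omega_1$ many open dense subsets of it is dense in it. A quantifier of type $\langle 2\rangle$ on $\omega_1$ is a family $Q$ of subsets of $\omega_1\times\omega_1$, i.e. $Q\subseteq2^{\omega_1\times\omega_1}$; it is downwards closed if closed under subsets. For a map $p$ and $A\subseteq\omega_1^2$, $p(A)=\{(p(a),p(b)):(a,b)\in A\}$. A function $p:\beta\to\omega_1$ with $\beta<\omega_1$ is compatible with $Q$ if for every $A\subseteq\beta\times\beta$, $A\in Q\iff p(A)\in Q$. A permutation $f$ of $\omega_1$ fixes $Q$ if $A\in Q\iff f(A)\in Q$ for all $A\subseteq\omega_1^2$; $\mathrm{Aut}(Q)$ is the group of such permutations. $Q$ is good if it is closed, downwards closed, and every injection $p:\beta\to\omega_1$ with $\beta<\omega_1$ compatible with $Q$ extends to a permutation of $\omega_1$ fixing $Q$. *)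

(* Defs.v *)
(* omega_1 is modelled abstractly as a type W with a strict
   well-order lt that is uncountable and all of whose proper initial segments
   are countable; any such (W, lt) is order-isomorphic to omega_1. *)
From Stdlib Require Import Classical.

Section Defs.
Context {W : Type} (lt : W -> W -> Prop).

Definition countable {T : Type} (D : T -> Prop) : Prop :=
  exists g : T -> nat, forall a b, D a -> D b -> g a = g b -> a = b.

Definition is_omega1 : Prop :=
  (forall x, ~ lt x x) /\
  (forall x y z, lt x y -> lt y z -> lt x z) /\
  (forall x y, lt x y \/ x = y \/ lt y x) /\
  well_founded lt /\
  ~ countable (fun _ : W => True) /\
  (forall x, countable (fun y => lt y x)).

End Defs.

Definition bijective {W : Type} (f : W -> W) : Prop :=
  (forall x y, f x = f y -> x = y) /\ (forall y, exists x, f x = y).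

Definition agree_on {W : Type} (D : W -> Prop) (f g : W -> W) : Prop :=
  forall x, D x -> f x = g x.

Definition subgroup {W : Type} (G : (W -> W) -> Prop) : Prop :=
  (forall f, G f -> bijective f) /\
  G (fun x => x) /\
  (forall f g, G f -> G g -> G (fun x => f (g x))) /\
  (forall f, G f -> exists g, G g /\ forall x, g (f x) = x /\ f (g x) = x).

(* G is closed in S_W (basic opens given by countable partial functions) *)
Definition closed_in_Sym {W : Type} (G : (W -> W) -> Prop) : Prop :=
  forall f, bijective f -> ~ G f ->
    exists D : W -> Prop, countable D /\
      forall g, bijective g -> agree_on D g f -> ~ G g.

Definition open_in {W : Type} (G U : (W -> W) -> Prop) : Prop :=
  (forall f, U f -> G f) /\
  (forall f, U f -> exists D : W -> Prop, countable D /\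
     forall g, G g -> agree_on D g f -> U g).

Definition dense_in {W : Type} (G V : (W -> W) -> Prop) : Prop :=
  forall f, G f -> forall D : W -> Prop, countable D ->
    exists g, G g /\ V g /\ agree_on D g f.

Definition omega1_Baire {W : Type} (G : (W -> W) -> Prop) : Prop :=
  forall U : W -> (W -> W) -> Prop,
    (forall i, open_in G (U i) /\ dense_in G (U i)) ->
    dense_in G (fun f => forall i, U i f).

Definition rel (W : Type) := W -> W -> Prop.
Definition quant (W : Type) := rel W -> Prop.

Definition img {W : Type} (p : W -> W) (A : rel W) : rel W :=
  fun a b => exists x y, A x y /\ a = p x /\ b = p y.

Definition Q_closed {W : Type} (Q : quant W) : Prop :=
  forall A, ~ Q A ->
    exists D : W * W -> Prop, countable D /\
      forall B, (forall x y, D (x, y) -> (A x y <-> B x y)) -> ~ Q B.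

Definition Q_down_closed {W : Type} (Q : quant W) : Prop :=
  forall A B, Q A -> (forall x y, B x y -> A x y) -> Q B.

Definition fixes {W : Type} (f : W -> W) (Q : quant W) : Prop :=
  forall A, Q A <-> Q (img f A).

(* p : beta -> W, given as a function on W whose values on {x | x < beta}
   matter; it is compatible with Q *)
Definition compatible {W : Type} (lt : W -> W -> Prop) (beta : W)
    (p : W -> W) (Q : quant W) : Prop :=
  forall A : rel W, (forall a b, A a b -> lt a beta /\ lt b beta) ->
    (Q A <-> Q (img p A)).

Definition good {W : Type} (lt : W -> W -> Prop) (Q : quant W) : Prop :=
  Q_closed Q /\ Q_down_closed Q /\
  forall (beta : W) (p : W -> W),
    (forall x y, lt x beta -> lt y beta -> p x = p y -> x = y) ->
    compatible lt beta p Q ->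
    exists f, bijective f /\ (forall x, lt x beta -> f x = p x) /\ fixes f Q.

(* Main.v *)
Require Import Defs.
From Stdlib Require Import Classical ClassicalEpsilon Arith Lia Cantor.

Section S.
Variable W : Type.
Variable lt : W -> W -> Prop.
Hypothesis Hw1 : is_omega1 lt.

Lemma irr : forall x, ~ lt x x. Proof. apply Hw1. Qed.
Lemma trans : forall x y z, lt x y -> lt y z -> lt x z. Proof. apply Hw1. Qed.
Lemma tri : forall x y, lt x y \/ x = y \/ lt y x. Proof. apply Hw1. Qed.
Lemma wf : well_founded lt. Proof. apply Hw1. Qed.
Lemma unc : ~ countable (fun _ : W => True). Proof. apply Hw1. Qed.
Lemma cntlt : forall x, countable (fun y => lt y x). Proof. apply Hw1. Qed.

Definition gl (x : W) : W -> nat := proj1_sig (constructive_indefinite_description _ (cntlt x)).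
Lemma gl_inj x : forall a b, lt a x -> lt b x -> gl x a = gl x b -> a = b.
Proof. unfold gl. destruct (constructive_indefinite_description _ (cntlt x)). simpl. auto. Qed.

Lemma asym x y : lt x y -> lt y x -> False.
Proof. intros; apply (irr x); eauto using trans. Qed.

Lemma min_exists (P : W -> Prop) : (exists x, P x) -> exists m, P m /\ forall y, P y -> ~ lt y m.
Proof.
  intros [x Hx]. apply NNPP; intro H.
  assert (forall z, ~ P z).
  { intro z. induction z using (well_founded_induction wf). intro Pz.
    apply H. exists z. split; auto. intros y Py Hy. exact (H0 y Hy Py). }
  exact (H0 x Hx).
Qed.

Lemma count_sub (D D' : W -> Prop) : countable D -> (forall x, D' x -> D x) -> countable D'.
Proof. intros [g Hg] H. exists g. intros. apply Hg; auto. Qed.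

Lemma count_img (D : W -> Prop) (f : W -> W) : countable D ->
  countable (fun w => exists x, D x /\ f x = w).
Proof.
  intros [g Hg].
  assert (forall w, {x : W | (exists x, D x /\ f x = w) -> D x /\ f x = w}) as sel.
  { intro w. destruct (excluded_middle_informative (exists x, D x /\ f x = w)) as [e|n].
    - destruct (constructive_indefinite_description _ e) as [x Hx]. exists x; auto.
    - exists w; intro; contradiction. }
  exists (fun w => g (proj1_sig (sel w))).
  intros a b Ha Hb E.
  destruct (sel a) as [xa Ha']; destruct (sel b) as [xb Hb']; simpl in E.
  destruct (Ha' Ha) as [Da Fa]; destruct (Hb' Hb) as [Db Fb].
  rewrite <- Fa, <- Fb. f_equal. auto.
Qed.

Lemma countable_le x : countable (fun y => lt y x \/ y = x).
Proof.
  exists (fun y => if excluded_middle_informative (y = x) then 0 else S (gl x y)).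
  intros a b Ha Hb E.
  destruct (excluded_middle_informative (a = x)); destruct (excluded_middle_informative (b = x));
    try congruence.
  injection E; intro. destruct Ha; destruct Hb; try congruence. apply gl_inj with x; auto.
Qed.

Lemma bounded (D : W -> Prop) : countable D -> exists b, forall x, D x -> lt x b.
Proof.
  intros [g Hg]. apply NNPP; intro H.
  assert (forall w, exists x, D x /\ (lt w x \/ w = x)).
  { intro w. apply NNPP; intro H1. apply H. exists w. intros x Dx.
    destruct (tri x w) as [h|[h|h]]; auto; exfalso; apply H1; exists x; auto. }
  apply unc.
  pose (xw := fun w => proj1_sig (constructive_indefinite_description _ (H0 w))).
  assert (Hxw : forall w, D (xw w) /\ (lt w (xw w) \/ w = xw w)).
  { intro w. unfold xw. destruct (constructive_indefinite_description _ (H0 w)); auto. }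
  exists (fun w => Cantor.to_nat (g (xw w), if excluded_middle_informative (w = xw w) then 0 else S (gl (xw w) w))).
  intros a b _ _ E.
  assert (E2 := f_equal Cantor.of_nat E). rewrite !cancel_of_to in E2. injection E2; intros E3 E4.
  assert (xw a = xw b) as X by (apply Hg; auto; apply Hxw).
  destruct (Hxw a) as [_ Ha]; destruct (Hxw b) as [_ Hb].
  rewrite X in *.
  destruct (excluded_middle_informative (a = xw b)); destruct (excluded_middle_informative (b = xw b));
    try congruence.
  injection E3; intro. destruct Ha; destruct Hb; try congruence. apply gl_inj with (xw b); auto.
Qed.

Lemma count_pairs a : countable (fun p : W * W => lt (fst p) a /\ lt (snd p) a).
Proof.
  exists (fun p => Cantor.to_nat (gl a (fst p), gl a (snd p))).
  intros [x y] [x' y'] [H1 H2] [H3 H4] E. cbn [fst snd] in *.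
  assert (E2 := f_equal Cantor.of_nat E). rewrite !cancel_of_to in E2. injection E2; intros.
  f_equal; apply gl_inj with a; auto.
Qed.


Lemma inh : exists w : W, True.
Proof.
  apply NNPP; intro H. apply unc. exists (fun w => False_rect nat (H (ex_intro _ w I))).
  intros a. elim H. exists a. exact I.
Qed.

Definition e0 : W := proj1_sig (constructive_indefinite_description _ (min_exists _ inh)).
Lemma e0_min : forall y, ~ lt y e0.
Proof. unfold e0. destruct (constructive_indefinite_description _ _) as [m Hm]. simpl. intros y; apply (proj2 Hm); exact I. Qed.

Lemma above x : exists y, lt x y.
Proof.
  apply NNPP; intro H. apply unc. apply count_sub with (fun y => lt y x \/ y = x).
  apply countable_le. intros y _. destruct (tri y x) as [h|[h|h]]; auto. exfalso; eauto.
Qed.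

Definition succ (x : W) : W := proj1_sig (constructive_indefinite_description _ (min_exists _ (above x))).
Lemma succ_gt x : lt x (succ x).
Proof. unfold succ. destruct (constructive_indefinite_description _ _) as [m Hm]. simpl. apply (proj1 Hm). Qed.
Lemma succ_min x y : lt x y -> ~ lt y (succ x).
Proof. unfold succ. destruct (constructive_indefinite_description _ _) as [m Hm]. simpl. intros H; apply (proj2 Hm); auto. Qed.

Fixpoint emb (n : nat) : W := match n with 0 => e0 | S n => succ (emb n) end.

Lemma emb_lt m n : m < n -> lt (emb m) (emb n).
Proof.
  induction n; intros; [lia|]. simpl. destruct (Nat.eq_dec m n).
  - subst. apply succ_gt.
  - eapply trans; [apply IHn; lia | apply succ_gt].
Qed.

Lemma emb_inj m n : emb m = emb n -> m = n.
Proof.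
  intros E. destruct (lt_eq_lt_dec m n) as [[h|h]|h]; auto.
  - apply emb_lt in h. rewrite E in h. exfalso; eapply irr; eauto.
  - apply emb_lt in h. rewrite E in h. exfalso; eapply irr; eauto.
Qed.

Lemma below_emb n y : lt y (emb n) -> exists m, y = emb m.
Proof.
  induction n; simpl; intros.
  - exfalso; eapply e0_min; eauto.
  - destruct (tri y (emb n)) as [h|[h|h]]; auto.
    + exists n; auto.
    + exfalso. eapply succ_min; eauto.
Qed.

Definition infinite (x : W) := forall n, x <> emb n.

Lemma inf_above x n : infinite x -> lt (emb n) x.
Proof.
  intros Hx. destruct (tri x (emb n)) as [h|[h|h]]; auto.
  - destruct (below_emb _ _ h) as [m ->]. exfalso; eapply Hx; eauto.
  - exfalso; eapply Hx; eauto.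
Qed.


Definition E x i j := exists a b, lt a b /\ lt b x /\ gl x a = i /\ gl x b = j.

Lemma E_half x z : infinite x -> lt x z -> (forall i j, E x i j <-> E z i j) -> False.
Proof.
  intros Ix Hxz HE.
  assert (H0 : forall a, exists a', lt a z -> lt a' x /\ gl x a' = gl z a).
  { intro a. destruct (classic (lt a z)) as [Ha|Ha]; [|exists a; tauto].
    assert (exists b, lt b x /\ b <> a) as [b [Hb Hba]].
    { destruct (classic (a = emb 0)).
      - exists (emb 1). split. apply inf_above; auto. intro; subst a.
        apply emb_inj in H0; discriminate.
      - exists (emb 0). split; auto. apply inf_above; auto. }
    assert (Hbz : lt b z) by eauto using trans.
    destruct (tri a b) as [h|[h|h]]; [|congruence|].
    - destruct (proj2 (HE (gl z a) (gl z b)) (ex_intro _ a (ex_intro _ b (conj h (conj Hbz (conj eq_refl eq_refl))))))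
        as [a'' [b'' [h1 [h2 [h3 h4]]]]].
      exists a''. intros _. split; eauto using trans.
    - destruct (proj2 (HE (gl z b) (gl z a)) (ex_intro _ b (ex_intro _ a (conj h (conj Ha (conj eq_refl eq_refl))))))
        as [a'' [b'' [h1 [h2 [h3 h4]]]]].
      exists b''. intros _. split; eauto using trans. }
  pose (k := fun a => proj1_sig (constructive_indefinite_description _ (H0 a))).
  assert (Hk : forall a, lt a z -> lt (k a) x /\ gl x (k a) = gl z a).
  { intro a. unfold k. destruct (constructive_indefinite_description _ (H0 a)); simpl; auto. }
  assert (Kmono : forall a b, lt a b -> lt b z -> lt (k a) (k b)).
  { intros a b Hab Hbz. assert (Haz : lt a z) by eauto using trans.
    destruct (proj2 (HE (gl z a) (gl z b)) (ex_intro _ a (ex_intro _ b (conj Hab (conj Hbz (conj eq_refl eq_refl))))))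
        as [a'' [b'' [h1 [h2 [h3 h4]]]]].
    destruct (Hk a Haz) as [k1 k2]; destruct (Hk b Hbz) as [k3 k4].
    assert (a'' = k a) by (apply gl_inj with x; eauto using trans; congruence).
    assert (b'' = k b) by (apply gl_inj with x; eauto using trans; congruence).
    subst; auto. }
  assert (Kge : forall a, lt a z -> ~ lt (k a) a).
  { intro a. induction a using (well_founded_induction wf). intros Haz Hka.
    assert (Hb : lt (k a) z) by eauto using trans.
    apply (H (k a) Hka Hb). apply Kmono; auto. }
  apply (Kge x Hxz). apply Hk; auto.
Qed.

Lemma E_inj x z : infinite x -> infinite z -> (forall i j, E x i j <-> E z i j) -> x = z.
Proof.
  intros Ix Iz HE. destruct (tri x z) as [h|[h|h]]; auto; exfalso.
  - exact (E_half x z Ix h HE).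
  - apply (E_half z x Iz h). intros; split; apply HE.
Qed.

Definition code x m := exists i j, m = Cantor.to_nat (i, j) /\ E x i j.
Definition lab x n := exists m, (n = 2*m /\ code x m) \/ (n = 2*m+1 /\ ~ code x m).

Lemma lab_anti x z : infinite x -> infinite z -> (forall n, lab x n -> lab z n) -> x = z.
Proof.
  intros Ix Iz H. apply E_inj; auto.
  assert (Hc : forall m, code x m <-> code z m).
  { intro m. destruct (classic (code x m)) as [c|c].
    - destruct (H (2*m) (ex_intro _ m (or_introl (conj eq_refl c)))) as [m' [[e c']|[e c']]]; try lia.
      assert (m = m') by lia; subst; tauto.
    - destruct (H (2*m+1) (ex_intro _ m (or_intror (conj eq_refl c)))) as [m' [[e c']|[e c']]]; try lia.
      assert (m = m') by lia; subst; tauto. }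
  intros i j. specialize (Hc (Cantor.to_nat (i, j))). unfold code in Hc.
  split; intro He.
  - destruct (proj1 Hc (ex_intro _ i (ex_intro _ j (conj eq_refl He)))) as [i' [j' [e He']]].
    assert (e2 := f_equal Cantor.of_nat e). rewrite !Cantor.cancel_of_to in e2. injection e2; intros; subst; auto.
  - destruct (proj2 Hc (ex_intro _ i (ex_intro _ j (conj eq_refl He)))) as [i' [j' [e He']]].
    assert (e2 := f_equal Cantor.of_nat e). rewrite !Cantor.cancel_of_to in e2. injection e2; intros; subst; auto.
Qed.


Definition R x y := (x = e0 /\ y = e0) \/ (exists n, x = emb n /\ y = emb (S n)) \/
  (infinite x /\ exists k, y = emb k /\ lab x k).

Lemma emb_S_ne n : emb n <> emb (S n).
Proof. intro E. apply emb_inj in E. lia. Qed.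

Lemma rigid (beta : W) (h : W -> W) :
  (forall x y, lt x beta -> lt y beta -> h x = h y -> x = y) ->
  (forall x y, lt x beta -> lt y beta -> R x y -> R (h x) (h y)) ->
  forall x, lt x beta -> h x = x.
Proof.
  intros Hinj Hpres x. induction x as [x IH] using (well_founded_induction wf). intros Hx.
  assert (IH' : forall y, lt y x -> h y = y) by (intros; apply IH; eauto using trans).
  assert (NL : ~ lt (h x) x).
  { intro L. assert (h (h x) = h x) by (apply IH'; auto).
    assert (h x = x) by (apply Hinj; eauto using trans). rewrite H0 in L. eapply irr; eauto. }
  destruct (classic (infinite x)) as [Ix|Fx].
  - destruct (tri x (h x)) as [L|[L|L]]; [|auto|contradiction].
    exfalso. set (z := h x) in *.
    assert (Iz : infinite z).
    { intros n En. rewrite En in L. destruct (below_emb _ _ L) as [m Em]. eapply Ix; eauto. }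
    apply (irr x). replace z with x in L; auto.
    apply lab_anti; auto. intros k Hk.
    assert (Hek : lt (emb k) x) by (apply inf_above; auto).
    assert (Rk : R x (emb k)) by (right; right; split; auto; exists k; auto).
    apply Hpres in Rk; eauto using trans. rewrite (IH' _ Hek) in Rk. fold z in Rk.
    destruct Rk as [[e1 e2]|[[n [e1 e2]]|[_ [k' [e1 e2]]]]].
    + exfalso; apply (Iz 0); exact e1.
    + exfalso; eapply Iz; eauto.
    + apply emb_inj in e1; subst; auto.
  - unfold infinite in Fx; apply not_all_not_ex in Fx. destruct Fx as [n En]. apply NNPP. intro Hn. subst x. destruct n.
    + assert (Rk : R (emb 0) (emb 0)) by (left; split; reflexivity).
      apply Hpres in Rk; auto.
      destruct Rk as [[e1 e2]|[[m [e1 e2]]|[Iz [k' [e1 e2]]]]].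
      * apply Hn; exact e1.
      * rewrite e1 in e2; eapply emb_S_ne; eauto.
      * eapply Iz; eauto.
    + assert (Hl : lt (emb n) (emb (S n))) by (apply emb_lt; lia).
      assert (Rk : R (emb n) (emb (S n))) by (right; left; exists n; auto).
      apply Hpres in Rk; eauto using trans. rewrite (IH' _ Hl) in Rk.
      destruct Rk as [[e1 e2]|[[m [e1 e2]]|[Iz [k' [e1 e2]]]]].
      * apply NL. rewrite e2. apply (emb_lt 0); lia.
      * apply emb_inj in e1; subst; auto.
      * eapply Iz; eauto.
Qed.


Variable G : (W -> W) -> Prop.
Hypothesis HG : subgroup G.
Hypothesis HGc : closed_in_Sym G.

Definition Q : quant W := fun A => forall a, exists g, G g /\
  forall x y, A x y -> lt x a -> lt y a -> img g R x y.

Lemma Q_down : Q_down_closed Q.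
Proof.
  intros A B HA HB a. destruct (HA a) as [g [Gg Hg]]. exists g; split; auto.
Qed.

Lemma Q_cl : Q_closed Q.
Proof.
  intros A nA. unfold Q in nA. apply not_all_ex_not in nA. destruct nA as [a Ha].
  exists (fun p => lt (fst p) a /\ lt (snd p) a). split.
  - apply count_pairs.
  - intros B HB QB. apply Ha. destruct (QB a) as [g [Gg Hg]]. exists g; split; auto.
    intros x y Axy Hx Hy. apply Hg; auto. apply (HB x y); auto.
Qed.

Lemma Q_R : Q R.
Proof.
  intros a. exists (fun x => x). split. apply HG. intros x y Rxy _ _. exists x, y; auto.
Qed.

Lemma Q_img f A : G f -> Q A -> Q (img f A).
Proof.
  intros Gf QA a.
  destruct HG as [_ [_ [Hc Hi]]].
  destruct (Hi f Gf) as [fi [Gfi Hfi]].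
  destruct (bounded (fun w => exists x, lt x a /\ fi x = w)) as [b Hb].
  { apply count_img. apply cntlt. }
  destruct (QA b) as [g [Gg Hg]].
  exists (fun x => f (g x)). split. apply Hc; auto.
  intros x y [u [v [Auv [-> ->]]]] Hx Hy.
  assert (lt u b) by (apply Hb; exists (f u); split; auto; apply Hfi).
  assert (lt v b) by (apply Hb; exists (f v); split; auto; apply Hfi).
  destruct (Hg u v Auv H H0) as [u' [v' [R' [-> ->]]]].
  exists u', v'; auto.
Qed.

Lemma G_fixes f : G f -> fixes f Q.
Proof.
  intros Gf A. split; [apply Q_img; auto|].
  intros QfA.
  destruct HG as [_ [_ [Hc Hi]]].
  destruct (Hi f Gf) as [fi [Gfi Hfi]].
  apply Q_down with (img fi (img f A)).
  - apply Q_img; auto.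
  - intros x y Axy. exists (f x), (f y). split; [|split; symmetry; apply Hfi].
    exists x, y; auto.
Qed.

Lemma inv_of (g : W -> W) : bijective g -> exists gi : W -> W, forall x, gi (g x) = x /\ g (gi x) = x.
Proof.
  intros [Hinj Hsur].
  exists (fun y => proj1_sig (constructive_indefinite_description _ (Hsur y))).
  intro x. split.
  - destruct (constructive_indefinite_description _ (Hsur (g x))); simpl; auto.
  - destruct (constructive_indefinite_description _ (Hsur x)); simpl; auto.
Qed.

Lemma key (beta : W) (p g : W -> W) : bijective g ->
  (forall x y, lt x beta -> lt y beta -> p x = p y -> x = y) ->
  (forall x y, lt x beta -> lt y beta -> R x y -> img g R (p x) (p y)) ->
  forall x, lt x beta -> p x = g x.
Proof.
  intros Bg Hinj Hp. destruct (inv_of g Bg) as [gi Hgi].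
  assert (forall x, lt x beta -> gi (p x) = x).
  { apply rigid.
    - intros x y Hx Hy E. apply Hinj; auto. rewrite <- (proj2 (Hgi (p x))), <- (proj2 (Hgi (p y))). congruence.
    - intros x y Hx Hy Rxy. destruct (Hp x y Hx Hy Rxy) as [u [v [Ruv [e1 e2]]]].
      rewrite e1, e2, !(proj1 (Hgi _)). auto. }
  intros x Hx. rewrite <- (H x Hx) at 2. symmetry; apply Hgi.
Qed.

Lemma fixes_G f : bijective f -> fixes f Q -> G f.
Proof.
  intros Bf Ff. apply NNPP; intro nG.
  destruct (HGc f Bf nG) as [D [cD HD]].
  destruct (bounded D cD) as [b Hb].
  destruct (bounded (fun w => exists x, lt x b /\ f x = w)) as [a Ha].
  { apply count_img. apply cntlt. }
  destruct (proj1 (Ff R) Q_R a) as [g [Gg Hg]].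
  assert (Bg : bijective g) by (apply HG; auto).
  apply (HD g Bg).
  - intros x Dx. symmetry. apply (key b f g Bg).
    + intros; apply Bf; auto.
    + intros x0 y0 Hx0 Hy0 R0. apply Hg.
      * exists x0, y0; auto.
      * apply Ha; eauto.
      * apply Ha; eauto.
    + apply Hb; auto.
  - exact Gg.
Qed.

Lemma Q_good : good lt Q.
Proof.
  split; [apply Q_cl|split; [apply Q_down|]].
  intros beta p Hinj Hcomp.
  set (A := fun x y => R x y /\ lt x beta /\ lt y beta).
  assert (QA : Q A) by (apply Q_down with R; [apply Q_R| intros x y [h _]; auto]).
  apply Hcomp in QA; [|intros a b [_ [h1 h2]]; auto].
  destruct (bounded (fun w => exists x, lt x beta /\ p x = w)) as [a Ha].
  { apply count_img. apply cntlt. }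
  destruct (QA a) as [g [Gg Hg]].
  assert (Bg : bijective g) by (apply HG; auto).
  exists g. split; [auto|split].
  - intros x Hx. symmetry. apply (key beta p g Bg Hinj); auto.
    intros x0 y0 Hx0 Hy0 R0. apply Hg.
    + exists x0, y0. unfold A; auto.
    + apply Ha; eauto.
    + apply Ha; eauto.
  - apply G_fixes; auto.
Qed.

End S.

Theorem proposition26 (W : Type) (lt : W -> W -> Prop)
  (Hw1 : is_omega1 lt)
  (CH : exists i : (nat -> bool) -> W, forall r s, i r = i s -> r = s)
  (G : (W -> W) -> Prop)
  (HG : subgroup G) (HGc : closed_in_Sym G) (HGb : omega1_Baire G) :
  exists Q : quant W, good lt Q /\
    forall f, bijective f -> (fixes f Q <-> G f).
Proof.
  exists (Q W lt Hw1 G). split.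
  - apply Q_good; auto.
  - intros f Bf. split.
    + apply fixes_G; auto.
    + apply G_fixes; auto.
Qed.
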